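(* Let $p$ be a prime, $0\le\sigma'<\sigma<1$, $\delta:=(\sigma-\sigma')/(1-\sigma)$, and $a_n$ ($n\in\mathbb{N}$) defined by $a_n:=p^{\lfloor\sigma' r\rfloor}$ if $n=p^r(p^{\lfloor\delta r\rfloor+1}+1)-1$ for some $r\in\mathbb{N}$ and $a_n:=0$ otherwise. For $n\in\mathbb{N}$ let $c_n:=\frac{1}{n+1}\sum_{k\ge n}a_k\binom{k}{n}t^{k-n}\in\mathbb{Q}_p\{\{t\}\}$ and $y_g:=\sum_{n\in\mathbb{N}}c_n(X-t)^{n+1}\in\mathbb{Q}_p\{\{t\}\}[[X-t]]$. Then $|c_n|/(n+1)^{1-\sigma'}=O(1)$ as $n\to\infty$ (indeed $\le p$ for all $n$), while for every $\lambda\in[0,1-\sigma')$, $\sup_n|c_n|/(n+1)^{\lambda}=\infty$. That is, $y_g$ is exactly of log-growth $1-\sigma'$.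
   Context: $|\cdot|_p$ is the $p$-adic absolute value with $|p|_p=p^{-1}$; $\lfloor x\rfloor$ is the largest integer $\le x$. $t$ is a formal variable and $\mathbb{Q}_p\{\{t\}\}$ is the fraction field of the $p$-adic completion of $\mathbb{Z}_p[[t]][t^{-1}]$, equipped with the Gauss norm $|\sum_i b_it^i|=\sup_i|b_i|_p$. A series $\sum_m c'_m(X-t)^m$ is of log-growth $\lambda$ if $|c'_{n+1}|/(n+1)^\lambda=O(1)$ as $n\to\infty$, and exactly of log-growth $\lambda$ if it is of log-growth $\lambda$ but not of log-growth $\lambda'$ for any $\lambda'<\lambda$. *)

(* Defs.v *)
From Stdlib Require Import Reals ClassicalEpsilon.
From mathcomp Require prime binomial.
Open Scope R_scope.

Definition floorZ (x : R) : Z := Int_part x.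

Definition delta (s' s : R) : R := (s - s') / (1 - s).

(* the exponent floor(delta r)  (nonnegative since 0 <= sigma' < sigma < 1) *)
Definition Nidx (p : nat) (s' s : R) (r : nat) : nat :=
  (p ^ r * (p ^ (Z.to_nat (floorZ (delta s' s * INR r)) + 1) + 1) - 1)%nat.

Definition a_seq (p : nat) (s' s : R) (n : nat) : nat :=
  match excluded_middle_informative (exists r : nat, n = Nidx p s' s r) with
  | left H =>
      let r := proj1_sig (constructive_indefinite_description _ H) in
      (p ^ Z.to_nat (floorZ (s' * INR r)))%nat
  | right _ => 0%nat
  end.

Definition padic_abs_nat (p m : nat) : R :=
  if Nat.eqb m 0 then 0 else / INR (p ^ prime.logn p m).

(* c_n = sum_{k >= n} b_{n,k} t^{k-n} with b_{n,k} = a_k * C(k,n) / (n+1) in Q.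
   |b_{n,k}|_p = |a_k C(k,n)|_p / |n+1|_p.  *)
Definition coef_abs (p : nat) (s' s : R) (n k : nat) : R :=
  padic_abs_nat p (a_seq p s' s k * binomial.binomial k n)
  / padic_abs_nat p (n + 1).

(* Gauss norm |c_n| = sup_{k >= n} |b_{n,k}|_p.  "|c_n| <= B" unfolds to: *)
Definition gauss_le (p : nat) (s' s : R) (n : nat) (B : R) : Prop :=
  forall k : nat, (n <= k)%nat -> coef_abs p s' s n k <= B.

(* Main.v *)
Require Import Defs.
From Stdlib Require Import Reals Lra Lia Psatz ZArith ClassicalEpsilon Classical.
From mathcomp Require prime binomial.
From mathcomp Require ssreflect ssrfun ssrbool eqtype ssrnat div zify.

Module NF.
Import ssreflect ssrfun ssrbool eqtype ssrnat div prime binomial zify.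
Local Open Scope nat_scope.
Lemma powE a b : Nat.pow a b = expn a b.
Proof. elim: b => [|b IH] //=. by rewrite expnS IH. Qed.

Lemma L_v_le p k n : n <= k -> logn p n.+1 <= logn p k.+1 + logn p 'C(k, n).
Proof.
move=> nk.
have E := mul_bin_diag k.+1 n. rewrite /= in E.
have h1 : 0 < 'C(k, n) by rewrite bin_gt0.
have h2 : 0 < 'C(k.+1, n.+1) by rewrite bin_gt0.
have := congr1 (logn p) E.
rewrite lognM // lognM //. lia.
Qed.

Lemma L_pow_le p m : 0 < m -> p ^ logn p m <= m.
Proof. move=> m0; apply: dvdn_leq => //; exact: pfactor_dvdnn. Qed.

Lemma L_ndvd p q M : prime p -> 0 < M -> ~~ (p %| q) -> logn p (p ^ M + q) = 0.
Proof.
move=> pp M0 nq; apply: logn_coprime; rewrite prime_coprime //.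
have h : p %| p ^ M by case: M M0 => // M _; rewrite expnS dvdn_mulr.
by rewrite dvdn_addr.
Qed.

Lemma L_logN p r j : prime p -> logn p (p ^ r * (p ^ j.+1 + 1)) = r.
Proof.
move=> pp.
have p1 := prime_gt1 pp.
rewrite lognM ?expn_gt0 ?addn_gt0 ?orbT ?(ltnW p1) // pfactorK //.
rewrite L_ndvd // ?addn0 // dvdn1; apply/eqP; lia.
Qed.

Lemma L_shift p M j : prime p -> 0 < j < p ^ M -> logn p (p ^ M + j) = logn p j.
Proof.
move=> pp /andP [j0 jM].
have [q cq Ej] := pfactor_coprime pp j0.
set a := logn p j in Ej *.
have p1 := prime_gt1 pp.
have aM : a < M.
  rewrite -(ltn_exp2l _ _ p1). apply: leq_ltn_trans jM. exact: L_pow_le.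
have EM : p ^ M = p ^ (M - a) * p ^ a by rewrite -expnD subnK // ltnW.
have cq' : coprime p (p ^ (M - a) + q).
  rewrite prime_coprime //.
  have h : p %| p ^ (M - a).
    case E: (M - a) => [|b]; first lia.
    by rewrite expnS dvdn_mulr.
  by rewrite dvdn_addr // -prime_coprime.
rewrite {1}Ej EM -mulnDl logn_Gauss // pfactorK //.
Qed.

Lemma L_C0 p M : prime p -> forall n, n < p ^ M -> logn p 'C(p ^ M + n, n) = 0.
Proof.
move=> pp; elim=> [|n IH] nM; first by rewrite bin0 logn1.
have E := mul_bin_diag (p ^ M + n.+1) n.
rewrite addnS /= in E.
have h1 : 0 < 'C(p ^ M + n, n) by rewrite bin_gt0 leq_addl.
have h2 : 0 < 'C((p ^ M + n).+1, n.+1) by rewrite bin_gt0 ltnS leq_addl.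
have := congr1 (logn p) E.
rewrite lognM // lognM // IH; last lia.
rewrite -addnS L_shift //.
lia.
Qed.

Lemma W1 p k n : (n <= k)%coq_nat -> (logn p (S n) <= logn p (S k) + logn p (binomial k n))%coq_nat.
Proof. move/leP=> h; apply/leP; exact: L_v_le. Qed.
Lemma W2 p m : (0 < m)%coq_nat -> (Nat.pow p (logn p m) <= m)%coq_nat.
Proof. move/ltP=> h; apply/leP; rewrite powE; exact: L_pow_le. Qed.
Lemma W3 p r j : prime p = true -> logn p (Nat.mul (Nat.pow p r) (Nat.add (Nat.pow p (S j)) 1)) = r.
Proof. move=> pp; rewrite !powE; exact: L_logN. Qed.
Lemma W4 p M n : prime p = true -> (n < Nat.pow p M)%coq_nat -> logn p (binomial (Nat.add (Nat.pow p M) n) n) = 0%nat.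
Proof. move=> pp /ltP h; rewrite !powE in h *; exact: L_C0. Qed.
Lemma W5 p m n : (0 < m)%coq_nat -> (0 < n)%coq_nat -> logn p (Nat.mul m n) = Nat.add (logn p m) (logn p n).
Proof. move=> /ltP h1 /ltP h2; exact: lognM. Qed.
Lemma W6 p r : prime p = true -> logn p (Nat.pow p r) = r.
Proof. move=> pp; rewrite powE; exact: pfactorK. Qed.
Lemma W8 (k n : nat) : (n <= k)%coq_nat -> (0 < binomial k n)%coq_nat.
Proof. move/leP=> h; apply/ltP; by rewrite bin_gt0. Qed.
Lemma W7 p : prime p = true -> (2 <= p)%coq_nat.
Proof. move=> pp; apply/leP; exact: prime_gt1. Qed.
End NF.
Open Scope R_scope.


Lemma exp_le' x y : x <= y -> exp x <= exp y.
Proof. intros [h|h]; [left; apply exp_increasing; exact h | rewrite h; lra]. Qed.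

Lemma exp_le_inv' x y : exp x <= exp y -> x <= y.
Proof. intros h. destruct (Rle_or_lt x y) as [?|h']; auto.
  apply exp_increasing in h'. lra. Qed.

Lemma floor_bounds x : 0 <= x ->
  INR (Z.to_nat (floorZ x)) <= x /\ x - 1 < INR (Z.to_nat (floorZ x)).
Proof.
  intros hx. unfold floorZ. destruct (base_Int_part x) as [h1 h2].
  assert (h0 : (0 <= Int_part x)%Z).
  { destruct (Z_le_gt_dec 0 (Int_part x)) as [?|h]; auto.
    assert (IZR (Int_part x) <= -1) by (apply IZR_le; lia). lra. }
  rewrite INR_IZR_INZ, Z2Nat.id by exact h0. lra.
Qed.

Lemma INR_pow_exp (p x : nat) : (0 < p)%nat ->
  INR (p ^ x) = exp (INR x * ln (INR p)).
Proof.
  intros hp. rewrite pow_INR. rewrite <- ln_pow by (apply lt_0_INR; lia).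
  rewrite exp_ln; auto. apply pow_lt. apply lt_0_INR; lia.
Qed.

Section Main.
Variables (p : nat) (s' s : R).
Hypothesis pp : prime.prime p = true.

Definition fr (r : nat) : nat := Z.to_nat (floorZ (delta s' s * INR r)).
Definition mr (r : nat) : nat := Z.to_nat (floorZ (s' * INR r)).

Lemma Nidx_S r : (Nidx p s' s r + 1 = p ^ r * (p ^ S (fr r) + 1))%nat.
Proof.
  unfold Nidx. fold (fr r). rewrite (Nat.add_1_r (fr r)).
  assert (p <> 0%nat) by (pose proof (NF.W7 p pp); lia).
  pose proof (Nat.pow_lower_bound p r H).
  set (A := (p ^ r)%nat) in *. set (B := (p ^ S (fr r))%nat).
  assert (A * (B + 1) >= 1)%nat by nia. lia.
Qed.

Lemma log_Nidx r : prime.logn p (Nidx p s' s r + 1) = r.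
Proof. rewrite Nidx_S. apply NF.W3; exact pp. Qed.

Lemma a_Nidx r : a_seq p s' s (Nidx p s' s r) = (p ^ mr r)%nat.
Proof.
  unfold a_seq.
  destruct excluded_middle_informative as [H|H].
  - destruct (constructive_indefinite_description _ H) as [r' Hr']. simpl.
    assert (r' = r).
    { rewrite <- (log_Nidx r'), <- Hr'. apply log_Nidx. }
    subst r'. reflexivity.
  - exfalso. apply H. exists r. reflexivity.
Qed.

Lemma a_cases k : a_seq p s' s k = 0%nat \/
  exists r, k = Nidx p s' s r /\ a_seq p s' s k = (p ^ mr r)%nat.
Proof.
  destruct (Classical_Prop.classic (exists r, k = Nidx p s' s r)) as [[r Hr]|H].
  - right. exists r. split; auto. subst k. apply a_Nidx.
  - left. unfold a_seq. destruct excluded_middle_informative as [H'|H']; auto.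
    contradiction.
Qed.

End Main.

Lemma R1 (p a c m r N : nat) (s' : R) : (2 <= p)%nat -> 0 <= s' -> s' < 1 ->
  (a <= r + c)%nat -> (p ^ a <= N)%nat -> s' * INR r - 1 < INR m ->
  INR (p ^ a) / INR (p ^ (m + c)) <= INR p * Rpower (INR N) (1 - s').
Proof.
  intros hp h0 h1 hac haN hm.
  assert (hP : 1 < INR p) by (apply lt_1_INR; lia).
  set (L := ln (INR p)).
  assert (hL : 0 < L) by (unfold L; rewrite <- ln_1; apply ln_increasing; lra).
  assert (hN : (1 <= N)%nat) by (pose proof (Nat.pow_lower_bound p a); lia).
  assert (hNp : 0 < INR N) by (apply lt_0_INR; lia).
  set (X := ln (INR N)).
  assert (hX : INR a * L <= X).
  { apply exp_le_inv'. unfold X. rewrite exp_ln by exact hNp.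
    unfold L; rewrite <- INR_pow_exp by lia. apply le_INR; exact haN. }
  unfold Rpower. fold X.
  rewrite !INR_pow_exp by lia. fold L.
  replace (INR p) with (exp L) at 1 by (unfold L; apply exp_ln; lra).
  unfold Rdiv. rewrite <- exp_Ropp, <- !exp_plus. apply exp_le'.
  rewrite plus_INR.
  assert (Hr : INR a <= INR r + INR c) by (rewrite <- plus_INR; apply le_INR; exact hac).
  pose proof (pos_INR c). pose proof (pos_INR m). pose proof (pos_INR a).
  assert (K1 : s' * INR a <= 1 + INR m + INR c) by nra.
  assert (K2 : 0 <= (1 - s') * (X - INR a * L)) by nra.
  assert (K3 : 0 <= (1 + INR m + INR c - s' * INR a) * L) by nra.
  nra.
Qed.

Lemma R2 (p r m : nat) (s' lam M : R) : (2 <= p)%nat ->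
  INR m <= s' * INR r ->
  INR r * ((1 - s' - lam) * ln (INR p)) > ln (Rmax 1 M) ->
  M * Rpower (INR (p ^ r)) lam < INR (p ^ r) / INR (p ^ m).
Proof.
  intros hp hm hr.
  assert (hP : 1 < INR p) by (apply lt_1_INR; lia).
  set (L := ln (INR p)) in *.
  unfold Rpower. rewrite !INR_pow_exp by lia. fold L. rewrite ln_exp.
  unfold Rdiv. rewrite <- exp_Ropp, <- exp_plus.
  assert (hR : 0 < Rmax 1 M) by (pose proof (Rmax_l 1 M); lra).
  apply Rle_lt_trans with (Rmax 1 M * exp (lam * (INR r * L))).
  { apply Rmult_le_compat_r; [left; apply exp_pos | apply Rmax_r]. }
  rewrite <- (exp_ln _ hR), <- exp_plus. apply exp_increasing.
  assert (hL : 0 < L) by (unfold L; rewrite <- ln_1; apply ln_increasing; lra).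
  nra.
Qed.

Lemma arch (x : R) : exists r : nat, x < INR r.
Proof.
  destruct (archimed x) as [h1 h2].
  destruct (Z_le_gt_dec 0 (up x)) as [h|h].
  - exists (Z.to_nat (up x)). rewrite INR_IZR_INZ, Z2Nat.id by exact h. lra.
  - exists 0%nat. simpl. assert (IZR (up x) <= 0) by (apply IZR_le; lia). lra.
Qed.

Lemma coef_val (p : nat) (s' s : R) (n k m : nat) : prime.prime p = true ->
  (n <= k)%nat -> a_seq p s' s k = (p ^ m)%nat ->
  coef_abs p s' s n k =
  INR (p ^ prime.logn p (n + 1)) / INR (p ^ (m + prime.logn p (binomial.binomial k n))).
Proof.
  intros pp hk ha.
  assert (hp : (2 <= p)%nat) by (apply NF.W7; exact pp).
  pose proof (NF.W8 k n hk) as hC.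
  assert (hm : (1 <= p ^ m)%nat) by (apply Nat.pow_lower_bound; lia).
  unfold coef_abs, padic_abs_nat. rewrite ha.
  assert (E1 : Nat.eqb (p ^ m * binomial.binomial k n) 0 = false) by (apply Nat.eqb_neq; nia).
  assert (E2 : Nat.eqb (n + 1) 0 = false) by (apply Nat.eqb_neq; lia).
  rewrite E1, E2.
  rewrite NF.W5 by lia. rewrite NF.W6 by exact pp.
  assert (P1 : 0 < INR (p ^ (m + prime.logn p (binomial.binomial k n))))
    by (apply lt_0_INR; apply Nat.neq_0_lt_0; apply Nat.pow_nonzero; lia).
  assert (P2 : 0 < INR (p ^ prime.logn p (n + 1)))
    by (apply lt_0_INR; apply Nat.neq_0_lt_0; apply Nat.pow_nonzero; lia).
  field. split; lra.
Qed.

Lemma NidxE (p : nat) (s' s : R) r : prime.prime p = true ->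
  Nidx p s' s r = (p ^ (r + S (fr s' s r)) + (p ^ r - 1))%nat /\
  (p ^ r - 1 < p ^ (r + S (fr s' s r)))%nat.
Proof.
  intros pp. assert (hp : (2 <= p)%nat) by (apply NF.W7; exact pp).
  unfold Nidx. fold (fr s' s r). rewrite (Nat.add_1_r (fr s' s r)).
  rewrite Nat.pow_add_r.
  assert (h1 : (1 <= p ^ r)%nat) by (apply Nat.pow_lower_bound; lia).
  assert (h2 : (1 <= p ^ S (fr s' s r))%nat) by (apply Nat.pow_lower_bound; lia).
  set (A := (p ^ r)%nat) in *. set (B := (p ^ S (fr s' s r))%nat) in *.
  assert (A * B >= A)%nat by nia.
  split; nia.
Qed.

Theorem mainTheorem4 (p : nat) (s' s : R) :
  prime.prime p = true ->
  0 <= s' -> s' < s -> s < 1 ->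
  (* |c_n| / (n+1)^{1-sigma'} <= p for all n (in particular O(1)) *)
  (forall n : nat,
      gauss_le p s' s n (INR p * Rpower (INR (n + 1)) (1 - s'))) /\
  (* for every lambda in [0, 1-sigma'), sup_n |c_n|/(n+1)^lambda = infinity *)
  (forall lam : R, 0 <= lam -> lam < 1 - s' ->
     forall M : R, exists n : nat,
       ~ gauss_le p s' s n (M * Rpower (INR (n + 1)) lam)).
Proof.
  intros pp hs0 hs1 hs2.
  assert (hp : (2 <= p)%nat) by (apply NF.W7; exact pp).
  split.
  - intros n k hk.
    destruct (a_cases p s' s pp k) as [H0 | [r [Hkr Ha]]].
    + unfold coef_abs. rewrite H0, Nat.mul_0_l. unfold padic_abs_nat at 1. simpl.
      unfold Rdiv. rewrite Rmult_0_l.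
      apply Rmult_le_pos; [apply pos_INR | unfold Rpower; left; apply exp_pos].
    + rewrite (coef_val p s' s n k (mr s' r) pp hk Ha).
      apply R1 with (r := r).
      * exact hp.
      * exact hs0.
      * lra.
      * pose proof (NF.W1 p k n hk) as h.
        rewrite <- (Nat.add_1_r k), Hkr, (log_Nidx p s' s pp r) in h.
        rewrite Nat.add_1_r, Hkr. exact h.
      * apply NF.W2. lia.
      * assert (0 <= s' * INR r) by (apply Rmult_le_pos; [lra | apply pos_INR]).
        destruct (floor_bounds (s' * INR r) H) as [_ h]. exact h.
  - intros lam hl0 hl1 M.
    assert (hP : 1 < INR p) by (apply lt_1_INR; lia).
    assert (hL : 0 < ln (INR p)) by (rewrite <- ln_1; apply ln_increasing; lra).
    set (K := (1 - s' - lam) * ln (INR p)).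
    assert (hK : 0 < K) by (unfold K; apply Rmult_lt_0_compat; lra).
    destruct (arch (ln (Rmax 1 M) / K)) as [r hr].
    exists (p ^ r - 1)%nat. intro H.
    destruct (NidxE p s' s r pp) as [E hlt].
    assert (hk : (p ^ r - 1 <= Nidx p s' s r)%nat) by lia.
    specialize (H _ hk).
    rewrite (coef_val p s' s _ _ (mr s' r) pp hk (a_Nidx p s' s pp r)) in H.
    assert (h1 : (1 <= p ^ r)%nat) by (apply Nat.pow_lower_bound; lia).
    replace (p ^ r - 1 + 1)%nat with (p ^ r)%nat in H by lia.
    rewrite E, (NF.W4 p _ _ pp hlt), NF.W6, Nat.add_0_r in H by exact pp.
    assert (hm : INR (mr s' r) <= s' * INR r).
    { assert (0 <= s' * INR r) by (apply Rmult_le_pos; [lra | apply pos_INR]).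
      destruct (floor_bounds (s' * INR r) H0) as [h _]. exact h. }
    assert (hr' : INR r * K > ln (Rmax 1 M)).
    { apply Rmult_lt_compat_r with (r := K) in hr; [|exact hK].
      unfold Rdiv in hr. rewrite Rmult_assoc, Rinv_l, Rmult_1_r in hr; lra. }
    pose proof (R2 p r (mr s' r) s' lam M hp hm hr'). lra.
Qed.
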